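(* Under the standing assumptions below, fix $k\ge1$ and define recursively, for $h\ge1$, $$\widetilde{X'_k}(h)=-\sum_{j=1}^{h-1}a_j\,\widetilde{X'_k}(h-j)-\sum_{j=1}^{k}a_{h-1+j}X_{k+1-j}$$ (the $h$-step truncated Wiener–Kolmogorov predictor of order $k$; the first sum is empty for $h=1$). Then for every $h\ge1$, $$X_{k+h}-\widetilde{X'_k}(h)=\sum_{l=0}^{h-1}b_l\,\varepsilon_{k+h-l}-\sum_{j=k+1}^{\infty}\Big(\sum_{m=0}^{h-1}a_{j+h-1-m}\,b_m\Big)X_{k+1-j},$$ and consequently $$\mathbb E\big[(\widetilde{X'_k}(h)-X_{k+h})^2\big]=\sigma_\varepsilon^2\sum_{l=0}^{h-1}b_l^2+\mathbb E\Big[\Big(\sum_{j=k+1}^{\infty}\Big(\sum_{m=0}^{h-1}a_{j+h-1-m}b_m\Big)X_{k+1-j}\Big)^2\Big].$$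
   Context: Standing assumptions. Let $(X_n)_{n\in\mathbb Z}$ be a real, zero-mean, weakly stationary process in $L^2$ with autocovariance function $\sigma(j)=\mathbb E[X_nX_{n+j}]$, satisfying $\sum_{j\in\mathbb Z}|\sigma(j)|=\infty$. Assume $X_n=\sum_{j\ge0}b_j\varepsilon_{n-j}$ (convergence in $L^2$). Here $(\varepsilon_n)_{n\in\mathbb Z}$ is a sequence of uncorrelated random variables with mean $0$ and variance $\sigma_\varepsilon^2>0$, and $b_0=1$, $\sum_j b_j^2<\infty$. Assume also $\varepsilon_n=\sum_{j\ge0}a_jX_{n-j}$ with $a_0=1$ and $\sum_j|a_j|<\infty$. The power series $A(z)=\sum_{j\ge0}a_jz^j$ and $B(z)=\sum_{j\ge0}b_jz^j$ satisfy $A(z)B(z)=1$ for $|z|\le1$. Fix $d\in(0,1/2)$. Assume that for every $\delta>0$ there exist constants $C_1,C_2$ (depending on $\delta$) such that $|a_j|\le C_1j^{-d-1+\delta}$ and $|b_j|\le C_2j^{d-1+\delta}$ for all $j\ge1$. *)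

(* Defs.v *)
From HB Require Import structures.
From mathcomp Require Import all_boot all_order all_algebra.
From mathcomp Require Import all_classical all_reals all_analysis.
Set Implicit Arguments. Unset Strict Implicit. Unset Printing Implicit Defensive.
Import Order.TTheory GRing.Theory Num.Theory.
Import numFieldNormedType.Exports.
Local Open Scope classical_set_scope.
Local Open Scope ring_scope.

Definition L2_cvg d (T : measurableType d) (R : realType) (P : probability T R)
  (u : nat -> T -> R) (Y : T -> R) : Prop :=
  ((fun N => 'E_P[(fun w => (u N w - Y w) ^+ 2)%R]%E) @ \oo --> 0%E).

(* Main.v *)
Require Import Defs.
From HB Require Import structures.
From mathcomp Require Import all_boot all_order all_algebra.
From mathcomp Require Import all_classical all_reals all_analysis.
From mathcomp Require Import zify ring lra.
Import Order.TTheory GRing.Theory Num.Theory.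
Import numFieldNormedType.Exports.
Local Open Scope classical_set_scope.
Local Open Scope ring_scope.

Section L2sec.
Context {d : measure_display} {T : measurableType d} {R : realType} (P : probability T R).
Notation L2 := (Lfun P 2%:E).

Lemma L2D {f g : T -> R} : f \in L2 -> g \in L2 -> (fun w => f w + g w) \in L2.
Proof. move=> hf hg; have H := rpredD hf hg; apply: H; by rewrite lee1n. Qed.

Lemma L2Z (c : R) {f : T -> R} : f \in L2 -> (fun w => c * f w) \in L2.
Proof. move=> hf; have H := @Lfun_scale _ _ _ P f c 2.
have -> : (fun w => c * f w) = c \o* f by apply/funext => w /=; rewrite mulrC. apply: H => //; by rewrite ler1n. Qed.

Lemma L2N {f : T -> R} : f \in L2 -> (fun w => - f w) \in L2.
Proof. move=> hf; have := L2Z (-1) hf. by under eq_fun do rewrite mulN1r. Qed.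

Lemma L2B {f g : T -> R} : f \in L2 -> g \in L2 -> (fun w => f w - g w) \in L2.
Proof. move=> hf hg; exact: (L2D hf (L2N hg)). Qed.

Lemma L2sum {I : Type} (r : seq I) (c : I -> R) (F : I -> T -> R) :
  (forall i, F i \in L2) -> (fun w => \sum_(i <- r) c i * F i w) \in L2.
Proof.
move=> hF; elim: r => [|i r IH].
  under eq_fun do rewrite big_nil. have H := Lfun_cst P 0 2; exact: H.
under eq_fun do rewrite big_cons. exact: L2D (L2Z _ (hF i)) IH.
Qed.

Definition ip (f g : T -> R) : R := fine ('E_P[f \* g])%E.

Lemma ipE {f g : T -> R} : f \in L2 -> g \in L2 -> ('E_P[f \* g] = (ip f g)%:E)%E.
Proof.
move=> hf hg; rewrite /ip fineK //; apply: expectation_fin_num.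
exact: Lfun2_mul_Lfun1.
Qed.

Lemma ipC f g : ip f g = ip g f.
Proof. by rewrite /ip; congr (fine ('E_P[_])); apply/funext => w /=; rewrite mulrC. Qed.

Lemma ip_ge0 f : 0 <= ip f f.
Proof.
rewrite /ip fine_ge0 // expectation_ge0 // => w /=. by rewrite -expr2 sqr_ge0.
Qed.

Lemma ipDl f g h : f \in L2 -> g \in L2 -> h \in L2 ->
  ip (fun w => f w + g w) h = ip f h + ip g h.
Proof.
move=> hf hg hh.
have := ipE (L2D hf hg) hh.
have -> : ((fun w => f w + g w) \* h) = (f \* h) \+ (g \* h).
  by apply/funext => w /=; rewrite mulrDl.
rewrite expectationD; try exact: Lfun2_mul_Lfun1.
rewrite (ipE hf hh) (ipE hg hh) => /esym/eqP; rewrite -EFinD eqe => /eqP.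
by [].
Qed.

Lemma ipZl c f h : f \in L2 -> h \in L2 ->
  ip (fun w => c * f w) h = c * ip f h.
Proof.
move=> hf hh.
have := ipE (L2Z c hf) hh.
have -> : ((fun w => c * f w) \* h) = c \o* (f \* h).
  by apply/funext => w /=; rewrite [RHS]mulrC mulrA.
rewrite expectationZl; last exact: Lfun2_mul_Lfun1.
rewrite (ipE hf hh) -EFinM => /esym/eqP; rewrite eqe => /eqP.
by [].
Qed.


Lemma ip0l g : ip (fun _ => 0) g = 0.
Proof.
rewrite /ip; have -> : ((fun _ : T => 0 : R) \* g) = cst 0.
  by apply/funext => w /=; rewrite mul0r.
by rewrite expectation_cst.
Qed.

Lemma ipsum (I : Type) (r : seq I) (c : I -> R) (F : I -> T -> R) g :
  (forall i, F i \in L2) -> g \in L2 ->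
  ip (fun w => \sum_(i <- r) c i * F i w) g = \sum_(i <- r) c i * ip (F i) g.
Proof.
move=> hF hg; elim: r => [|i r IH].
  by under eq_fun do rewrite big_nil; rewrite big_nil ip0l.
under eq_fun do rewrite big_cons; rewrite big_cons.
rewrite ipDl //; [|exact: L2Z|exact: L2sum].
by rewrite ipZl // IH.
Qed.

Lemma ipNl f g : f \in L2 -> g \in L2 -> ip (fun w => - f w) g = - ip f g.
Proof.
move=> hf hg; have -> : (fun w => - f w) = (fun w => (-1) * f w).
  by apply/funext => w; rewrite mulN1r.
by rewrite ipZl // mulN1r.
Qed.

Lemma ipBl f g h : f \in L2 -> g \in L2 -> h \in L2 ->
  ip (fun w => f w - g w) h = ip f h - ip g h.
Proof. by move=> hf hg hh; rewrite ipDl ?ipNl //; exact: L2N. Qed.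

Lemma CS {f g : T -> R} : f \in L2 -> g \in L2 -> ip f g ^+ 2 <= ip f f * ip g g.
Proof.
move=> hf hg.
set A := ip f f; set B := ip g g; set C := ip f g.
have H t : 0 <= A - 2 * t * C + t ^+ 2 * B.
  have hg' : (fun w => t * g w) \in L2 by exact: L2Z.
  have := ip_ge0 (fun w => f w - t * g w).
  rewrite ipBl ?L2B //.
  have e1 : ip f (fun w => f w - t * g w) = A - t * C.
    by rewrite ipC ipBl // ipZl // [ip g f]ipC.
  have e2 : ip (fun w => t * g w) (fun w => f w - t * g w) = t * C - t ^+ 2 * B.
    rewrite ipZl ?L2B // ipC ipBl // ipZl // -/C -/B.
    by rewrite mulrBr expr2 mulrA.
  rewrite e1 e2.
  by congr (0 <= _); ring.
have B0 : 0 <= B by exact: ip_ge0.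
have [Bz|Bp] := eqVneq B 0.
  rewrite Bz mulr0.
  have [Cz|Cn] := eqVneq C 0; first by rewrite Cz expr0n.
  have := H ((A + 1) / (2 * C)).
  rewrite Bz mulr0 addr0.
  have -> : 2 * ((A + 1) / (2 * C)) * C = A + 1.
    by field.
  move=> h; exfalso; move: h; apply/negP; rewrite -ltNge; lra.
have Bp' : 0 < B by rewrite lt_def Bp B0.
set t := C / B.
have tB : t * B = C by rewrite /t mulfVK.
have := H t; rewrite -tB => Ht.
nra.
Qed.


Lemma quad f g s : f \in L2 -> g \in L2 ->
  ip (fun w => f w + s * g w) (fun w => f w + s * g w)
  = ip f f + 2 * s * ip f g + s ^+ 2 * ip g g.
Proof.
move=> hf hg.
have hsg : (fun w => s * g w) \in L2 by exact: L2Z.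
have hF : (fun w => f w + s * g w) \in L2 by exact: L2D.
have e1 : ip f (fun w => f w + s * g w) = ip f f + s * ip f g.
  by rewrite ipC ipDl // ipZl // [ip g f]ipC.
have e2 : ip (fun w => s * g w) (fun w => f w + s * g w) = s * ip f g + s ^+ 2 * ip g g.
  rewrite ipZl // ipC ipDl // ipZl //.
  by rewrite mulrDr expr2 mulrA.
rewrite ipDl // e1 e2; ring.
Qed.

Lemma ipDD f g : f \in L2 -> g \in L2 ->
  ip (fun w => f w + g w) (fun w => f w + g w) <= 2 * ip f f + 2 * ip g g.
Proof.
move=> hf hg.
have := ip_ge0 (fun w => f w + (-1) * g w).
rewrite quad //.
have -> : (fun w => f w + g w) = (fun w => f w + 1 * g w).
  by apply/funext => w; rewrite mul1r.
rewrite quad //.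
have := ip_ge0 g. lra.
Qed.

Lemma ipZZ c f : f \in L2 ->
  ip (fun w => c * f w) (fun w => c * f w) = c ^+ 2 * ip f f.
Proof.
move=> hf; rewrite ipZl ?L2Z // ipC ipZl //; by rewrite mulrA expr2.
Qed.

Lemma L2cvgE {u : nat -> T -> R} {Y : T -> R} : (forall N, u N \in L2) -> Y \in L2 ->
  L2_cvg P u Y <->
  (fun N => ip (fun w => u N w - Y w) (fun w => u N w - Y w)) @ \oo --> (0:R).
Proof.
move=> hu hY.
have E N : ('E_P[(fun w => (u N w - Y w) ^+ 2)%R] =
   (ip (fun w => u N w - Y w) (fun w => u N w - Y w))%:E)%E.
  rewrite -ipE ?L2B //; congr ('E_P[_])%E; apply/funext => w /=; by rewrite expr2.
rewrite /L2_cvg.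
have eqF : (fun N => ip (fun w => u N w - Y w) (fun w => u N w - Y w))
  = fine \o (fun N => 'E_P[(fun w => (u N w - Y w) ^+ 2)%R]%E).
  by apply/funext => N /=; rewrite E.
rewrite eqF; split; first exact: fine_cvg.
move=> H; apply: cvg_EFin => //; by apply: nearW => N; rewrite E.
Qed.

Lemma LL (u : nat -> T -> R) Y g c : (forall N, u N \in L2) -> Y \in L2 ->
  g \in L2 -> L2_cvg P u Y ->
  (exists N0, forall N, (N0 <= N)%N -> ip (u N) g = c) -> ip Y g = c.
Proof.
move=> hu hY hg /(L2cvgE hu hY) H [N0 HN0].
apply/eqP; rewrite -subr_eq0; apply/eqP.
set c' := ip Y g - c.
have key e : 0 < e -> c' ^+ 2 <= e.
  move=> e0.
  set B := ip g g.
  have B0 : 0 <= B by exact: ip_ge0.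
  have e1 : 0 < e / (B + 1) by rewrite divr_gt0 // ltr_wpDl.
  have := cvgr0_norm_lt _ H _ e1.
  move=> [N1 _ HN1].
  pose N := maxn N0 N1.
  have := HN1 N (leq_maxr _ _) => /= HA.
  have hD : (fun w => u N w - Y w) \in L2 by exact: L2B.
  have eq1 : c' = - ip (fun w => u N w - Y w) g.
    by rewrite ipBl // HN0 ?leq_maxl // /c' opprB.
  have := CS hD hg; rewrite -/B -[ip _ g ^+ 2]sqrrN -eq1.
  set A := ip (fun w => u N w - Y w) (fun w => u N w - Y w) in HA *.
  have A0 : 0 <= A by exact: ip_ge0.
  rewrite ger0_norm // in HA.
  move=> h; apply: (le_trans h).
  have : A * (B + 1) <= e.
    by rewrite -ler_pdivlMr ?ltr_wpDl // ltW.
  nra.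
have c0 : c' ^+ 2 <= 0.
  rewrite leNgt; apply/negP => hp.
  have := key _ (divr_gt0 hp (ltr0n _ 2)); lra.
have : c' ^+ 2 == 0 by rewrite eq_le c0 sqr_ge0.
by rewrite sqrf_eq0 => /eqP.
Qed.


Lemma null_sum (h : nat) (c : nat -> R) (F : nat -> nat -> T -> R) :
  (forall l N, F l N \in L2) ->
  (forall l, (l < h)%N -> (fun N => ip (F l N) (F l N)) @ \oo --> (0:R)) ->
  (fun N => ip (fun w => \sum_(0 <= l < h) c l * F l N w)
               (fun w => \sum_(0 <= l < h) c l * F l N w)) @ \oo --> (0:R).
Proof.
move=> hF; elim: h => [|h IH] H.
  have -> : (fun N => ip (fun w => \sum_(0 <= l < 0) c l * F l N w)
               (fun w => \sum_(0 <= l < 0) c l * F l N w)) = fun=> 0.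
    apply/funext => N; rewrite (_ : (fun w => _) = fun=> 0) ?ip0l //.
    by apply/funext => w; rewrite big_geq.
  exact: cvg_cst.
have IH' := IH (fun l hl => H l (ltnW hl)).
have HF := H h (ltnSn h).
set G := fun N w => \sum_(0 <= l < h) c l * F l N w.
have hG N : G N \in L2.
  have := L2sum (index_iota 0 h) c (F^~ N) (fun l => hF l N). by [].
have -> : (fun N => ip (fun w => \sum_(0 <= l < h.+1) c l * F l N w)
               (fun w => \sum_(0 <= l < h.+1) c l * F l N w))
  = fun N => ip (fun w => G N w + c h * F h N w) (fun w => G N w + c h * F h N w).
  apply/funext => N.
  by rewrite (_ : (fun w => _) = (fun w => G N w + c h * F h N w)) //;
    apply/funext => w; rewrite big_nat_recr.
apply: (@squeeze_cvgr nat \oo _ R (fun=> 0)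
  (fun N => 2 * ip (G N) (G N) + 2 * (c h ^+ 2 * ip (F h N) (F h N)))).
- apply: filterE => N /=. rewrite ip_ge0 /=.
  rewrite -ipZZ //. apply: ipDD => //.
  exact: L2Z.
- exact: cvg_cst.
- rewrite -[0 : R](addr0 0).
  apply: cvgD.
  + rewrite -(mulr0 2); exact: cvgMl_tmp.
  + rewrite -(mulr0 2); apply: cvgMl_tmp.
    rewrite -(mulr0 (c h ^+ 2)); exact: cvgMl_tmp.
Qed.


Lemma L2sum_nat (m n : nat) (c : nat -> R) (F : nat -> T -> R) :
  (forall i, (m <= i < n)%N -> F i \in L2) ->
  (fun w => \sum_(m <= i < n) c i * F i w) \in L2.
Proof.
move=> hF.
pose F' i := if (m <= i < n)%N then F i else (fun=> 0).
have -> : (fun w => \sum_(m <= i < n) c i * F i w)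
        = (fun w => \sum_(i <- index_iota m n) c i * F' i w).
  apply/funext => w; apply: eq_big_nat => i hi; by rewrite /F' hi.
apply: L2sum => i; rewrite /F'; case: ifP => hi; first exact: hF.
have := Lfun_cst P 0 2; by [].
Qed.

Lemma ipsum_nat (m n : nat) (c : nat -> R) (F : nat -> T -> R) g :
  (forall i, (m <= i < n)%N -> F i \in L2) -> g \in L2 ->
  ip (fun w => \sum_(m <= i < n) c i * F i w) g
  = \sum_(m <= i < n) c i * ip (F i) g.
Proof.
move=> hF hg.
pose F' i := if (m <= i < n)%N then F i else (fun=> 0).
have -> : (fun w => \sum_(m <= i < n) c i * F i w)
        = (fun w => \sum_(i <- index_iota m n) c i * F' i w).
  apply/funext => w; apply: eq_big_nat => i hi; by rewrite /F' hi.
rewrite ipsum //.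
  apply: eq_big_nat => i hi; by rewrite /F' hi.
move=> i; rewrite /F'; case: ifP => hi; first exact: hF.
have := Lfun_cst P 0 2; by [].
Qed.

End L2sec.

Lemma sum_delta (R : comPzRingType) (F : nat -> R) m n t : (m <= t < n)%N ->
  \sum_(m <= j < n) F j * (j == t)%:R = F t.
Proof.
move=> /andP[h1 h2].
rewrite (big_cat_nat h1 (ltnW h2)) /= [X in _ + X]big_ltn // eqxx mulr1.
rewrite big_nat_cond big1; last first.
  move=> j /andP[/andP[_ hj] _]; rewrite (_ : (j == t) = false) ?mulr0 //; lia.
rewrite big_nat_cond big1; last first.
  move=> j /andP[/andP[hj _] _]; rewrite (_ : (j == t) = false) ?mulr0 //; lia.
by rewrite add0r addr0.
Qed.

Section Alg.
Variable R : comPzRingType.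

Lemma conv_swap (F : nat -> nat -> R) h :
  \sum_(0 <= l < h) \sum_(0 <= j < h - l) F l j
  = \sum_(0 <= n < h) \sum_(0 <= l < n.+1) F l (n - l)%N.
Proof.
elim: h => [|h IH]; first by rewrite !big_geq.
rewrite [RHS]big_nat_recr //= -IH.
rewrite (@eq_big_nat _ _ _ 0 h.+1 _
   (fun l => \sum_(0 <= j < h - l) F l j + F l (h - l)%N)); last first.
  move=> l /andP[_ hl]; rewrite subSn // big_nat_recr //.
rewrite big_split /= [X in X + _ = _]big_nat_recr //= subnn [\sum_(0 <= j < 0) _]big_geq // addr0.
by [].
Qed.

Lemma shift_sum (F : nat -> R) m n c :
  \sum_(m <= i < n) F (i + c)%N = \sum_(m + c <= j < n + c) F j.
Proof. by rewrite big_addn addnK. Qed.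


Variables (a b : nat -> R) (x e : int -> R) (xt : nat -> R) (k : nat).
Hypothesis ha0 : a 0%N = 1.
Hypothesis hrec : forall g, (1 <= g)%N -> xt g =
     - (\sum_(1 <= j < g) a j * xt (g - j)%N)
     - \sum_(1 <= j < k.+1) a (g - 1 + j)%N * x (k%:Z + 1 - j%:Z).

Let D g := x (k%:Z + g%:Z) - xt g.

Lemma claim1 g M : (1 <= g)%N -> (g + k <= M)%N ->
  \sum_(0 <= j < g) a j * D (g - j)%N =
  \sum_(0 <= j < M) a j * x (k%:Z + g%:Z - j%:Z)
  - \sum_(g + k <= j < M) a j * x (k%:Z + g%:Z - j%:Z).
Proof.
move=> hg hM.
rewrite (big_cat_nat (leq0n (g + k)) hM) /= addrK.
rewrite (big_cat_nat (leq0n g) (leq_addr k g)) /=.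
have e1 : \sum_(g <= j < g + k) a j * x (k%:Z + g%:Z - j%:Z)
   = \sum_(1 <= j < k.+1) a (g - 1 + j)%N * x (k%:Z + 1 - j%:Z).
  have := shift_sum (fun j => a j * x (k%:Z + g%:Z - j%:Z)) 1 k.+1 (g - 1).
  rewrite (_ : (1 + (g - 1))%N = g); last by lia.
  rewrite (_ : (k.+1 + (g - 1))%N = (g + k)%N); last by lia.
  move=> <-; apply: eq_big_nat => j /andP[hj1 hj2].
  rewrite addnC; congr (_ * x _); lia.
rewrite e1.
have e2 : \sum_(0 <= j < g) a j * xt (g - j)%N
   = - \sum_(1 <= j < k.+1) a (g - 1 + j)%N * x (k%:Z + 1 - j%:Z).
  rewrite big_ltn // ha0 mul1r subn0 (hrec _ hg); ring.
rewrite /D.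
under eq_big_nat => j /andP[_ hj] do rewrite mulrBr.
rewrite sumrB e2 opprK.
congr (_ + _); apply: eq_big_nat => j /andP[_ hj].
congr (_ * x _); lia.
Qed.


Hypothesis hconv : forall n, \sum_(0 <= j < n.+1) a j * b (n - j)%N = (n == 0%N)%:R.

Lemma claim2 h : (1 <= h)%N ->
  D h = \sum_(0 <= l < h) b l * \sum_(0 <= j < h - l) a j * D (h - l - j)%N.
Proof.
move=> h1.
under eq_big_nat => l _ do rewrite mulr_sumr.
rewrite (conv_swap (fun l j => b l * (a j * D (h - l - j)%N))).
rewrite (@eq_big_nat _ _ _ 0 h _ (fun n => (n == 0%N)%:R * D (h - n)%N)); last first.
  move=> n /andP[_ hn].
  rewrite -(hconv n) mulr_suml.
  rewrite big_nat_rev /=. apply: eq_big_nat => i /andP[_ hi].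
  rewrite add0n subSS (_ : (h - (n - i) - (n - (n - i)))%N = (h - n)%N); last by lia.
  rewrite (_ : (n - (n - i))%N = i); last by lia.
  ring.
rewrite big_ltn // eqxx mul1r subn0 big_nat_cond big1 ?addr0 // => n /andP[/andP[hn _] _].
by rewrite (_ : (n == 0%N) = false) ?mul0r //; lia.
Qed.

Lemma claim3 h N : (1 <= h)%N -> (k.+1 <= N)%N ->
  \sum_(k.+1 <= j < N) (\sum_(0 <= m < h) a (j + h - 1 - m)%N * b m)
        * x (k%:Z + 1 - j%:Z)
  = \sum_(0 <= l < h) b l * \sum_((h - l) + k <= j < N + (h - l - 1))
        a j * x (k%:Z + (h - l)%N%:Z - j%:Z).
Proof.
move=> h1 hN.
under eq_big_nat => j _ do rewrite mulr_suml.
rewrite exchange_big_nat /=.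
apply: eq_big_nat => m /andP[_ hm].
rewrite mulr_sumr.
rewrite (_ : ((h - m) + k)%N = (k.+1 + (h - m - 1))%N); last by lia.
rewrite -shift_sum.
apply: eq_big_nat => j /andP[hj _].
rewrite (_ : (j + h - 1 - m)%N = (j + (h - m - 1))%N); last by lia.
rewrite (_ : (k%:Z + 1 - j%:Z) = (k%:Z + (h - m)%N%:Z - (j + (h - m - 1))%N%:Z)); last by lia.
ring.
Qed.

Lemma final h N : (1 <= h)%N -> (k.+1 <= N)%N ->
  \sum_(k.+1 <= j < N) (\sum_(0 <= m < h) a (j + h - 1 - m)%N * b m)
        * x (k%:Z + 1 - j%:Z)
  - (\sum_(0 <= l < h) b l * e (k%:Z + h%:Z - l%:Z) - (x (k%:Z + h%:Z) - xt h))
  = \sum_(0 <= l < h) b l *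
      (\sum_(0 <= j < N + (h - l - 1)) a j * x (k%:Z + h%:Z - l%:Z - j%:Z)
       - e (k%:Z + h%:Z - l%:Z)).
Proof.
move=> h1 hN.
rewrite (claim3 _ _ h1 hN).
under [RHS]eq_big_nat => l /andP[_ hl].
  rewrite (_ : \sum_(0 <= j < N + (h - l - 1)) a j * x (k%:Z + h%:Z - l%:Z - j%:Z)
     = \sum_(0 <= j < N + (h - l - 1)) a j * x (k%:Z + (h - l)%N%:Z - j%:Z)); last first.
    by apply: eq_big_nat => j _; congr (_ * x _); lia.
  rewrite -[X in X - _](subrK (\sum_((h - l) + k <= j < N + (h - l - 1))
        a j * x (k%:Z + (h - l)%N%:Z - j%:Z))).
  rewrite -claim1; [|lia|lia].
  over.
rewrite /=.
under [RHS]eq_big_nat => l _ do rewrite mulrBr mulrDr.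
rewrite sumrB big_split /= -claim2 //.
rewrite /D; ring.
Qed.

End Alg.

Theorem mainTheorem7 (R : realType) (dT : measure_display) (T : measurableType dT)
  (P : probability T R) (X eps : int -> T -> R) (sigma : int -> R)
  (a b : nat -> R) (s2 d : R) (k : nat) (Xt : nat -> T -> R) :
  (* X: real, zero-mean, weakly stationary, in L^2 *)
  (forall n, X n \in Lfun P 2%:E) ->
  (forall n, ('E_P[X n] = 0)%E) ->
  (forall n j, ('E_P[X n \* X (n + j)%R] = (sigma j)%:E)%E) ->
  (\esum_(j in [set: int]) (`|sigma j|)%:E = +oo)%E ->
  (* innovations: uncorrelated, mean 0, variance s2 > 0 *)
  (forall n, eps n \in Lfun P 2%:E) ->
  (forall n, ('E_P[eps n] = 0)%E) ->
  (forall n m, n != m -> ('E_P[eps n \* eps m] = 0)%E) ->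
  (forall n, ('E_P[eps n \* eps n] = s2%:E)%E) ->
  0 < s2 ->
  (* MA(infinity) representation, converging in L^2 *)
  b 0%N = 1 ->
  cvgn (series (fun j => b j ^+ 2)) ->
  (forall n, L2_cvg P (fun N w => \sum_(0 <= j < N) b j * eps (n - j%:Z) w) (X n)) ->
  (* AR(infinity) representation, converging in L^2 *)
  a 0%N = 1 ->
  cvgn (series (fun j => `|a j|)) ->
  (forall n, L2_cvg P (fun N w => \sum_(0 <= j < N) a j * X (n - j%:Z) w) (eps n)) ->
  (* A(z) B(z) = 1 (on the open unit disc, real z; see NOTES.md) *)
  (forall z : R, `|z| < 1 ->
     limn (series (fun j => a j * z ^+ j)) * limn (series (fun j => b j * z ^+ j)) = 1) ->
  (* power-law decay of the coefficients *)
  0 < d < 2^-1 ->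
  (forall delta : R, 0 < delta -> exists C1 C2 : R, forall j : nat, (0 < j)%N ->
     `|a j| <= C1 * (j%:R `^ (- d - 1 + delta)) /\
     `|b j| <= C2 * (j%:R `^ (d - 1 + delta))) ->
  (* k >= 1 and the truncated Wiener-Kolmogorov predictor recursion *)
  (1 <= k)%N ->
  (forall h, (1 <= h)%N -> Xt h = fun w =>
     - (\sum_(1 <= j < h) a j * Xt (h - j)%N w)
     - \sum_(1 <= j < k.+1) a (h - 1 + j)%N * X (k%:Z + 1 - j%:Z) w) ->
  forall h, (1 <= h)%N ->
  exists S : T -> R,
    S \in Lfun P 2%:E /\
    (* S = sum_{j >= k+1} (sum_{m<h} a_{j+h-1-m} b_m) X_{k+1-j}, in L^2 *)
    L2_cvg P (fun N w => \sum_(k.+1 <= j < N)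
                (\sum_(0 <= m < h) a (j + h - 1 - m)%N * b m) * X (k%:Z + 1 - j%:Z) w) S /\
    (\forall w \ae P, X (k%:Z + h%:Z) w - Xt h w
       = \sum_(0 <= l < h) b l * eps (k%:Z + h%:Z - l%:Z) w - S w) /\
    ('E_P[(fun w => (Xt h w - X (k%:Z + h%:Z) w) ^+ 2)%R]
       = (s2 * \sum_(0 <= l < h) b l ^+ 2)%:E + 'E_P[(fun w => S w ^+ 2)%R])%E.
Proof.
move=> hX hXm hcov hsig heps hepsm hepsu heps2 s2p hb0 hbsq hMA ha0 hasum hAR hAB
  hd hdecay hk hrec h h1.
have ipee n m : ip P (eps n) (eps m) = (n == m)%:R * s2.
  have H := ipE P (heps n) (heps m).
  apply: EFin_inj; rewrite -H.
  case: (eqVneq n m) => [<-|nm]; first by rewrite heps2 mul1r.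
  by rewrite hepsu // mul0r.
have XE1 n m : n < m -> ip P (X n) (eps m) = 0.
  move=> nm.
  apply: (LL P (fun N w => \sum_(0 <= j < N) b j * eps (n - j%:Z) w)).
  - move=> N; apply: L2sum_nat => j _; exact: heps.
  - exact: hX.
  - exact: heps.
  - exact: hMA.
  - exists 0%N => N _.
    rewrite ipsum_nat; [|by move=> j _; exact: heps|exact: heps].
    rewrite big_nat_cond big1 // => j _.
    rewrite ipee (_ : (n - j%:Z == m) = false) ?mul0r ?mulr0 //; lia.
have XE2 m t : ip P (X (m + t%:Z)) (eps m) = s2 * b t.
  apply: (LL P (fun N w => \sum_(0 <= j < N) b j * eps (m + t%:Z - j%:Z) w)).
  - move=> N; apply: L2sum_nat => j _; exact: heps.
  - exact: hX.
  - exact: heps.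
  - exact: hMA.
  - exists t.+1 => N hN.
    rewrite ipsum_nat; [|by move=> j _; exact: heps|exact: heps].
    transitivity (\sum_(0 <= j < N) (s2 * b j) * (j == t)%:R).
      apply: eq_big_nat => j _; rewrite ipee.
      have -> : (m + t%:Z - j%:Z == m) = (j == t) by apply/eqP/eqP => H; lia.
      ring.
    by rewrite sum_delta //; apply/andP; split.
have s20 : s2 != 0 by rewrite gt_eqF.
have hconv t : \sum_(0 <= j < t.+1) a j * b (t - j)%N = (t == 0%N)%:R.
  have H : ip P (eps 0) (eps (0 - t%:Z)) = s2 * \sum_(0 <= j < t.+1) a j * b (t - j)%N.
    apply: (LL P (fun N w => \sum_(0 <= j < N) a j * X (0 - j%:Z) w)).
    - move=> N; apply: L2sum_nat => j _; exact: hX.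
    - exact: heps.
    - exact: heps.
    - exact: hAR.
    - exists t.+1 => N hN.
      rewrite ipsum_nat; [|by move=> j _; exact: hX|exact: heps].
      rewrite (big_cat_nat (leq0n t.+1) hN) /=.
      rewrite [X in _ + X]big_nat_cond [X in _ + X]big1 ?addr0; last first.
        move=> j /andP[/andP[hj _] _]; rewrite XE1 ?mulr0 //; lia.
      rewrite mulr_sumr; apply: eq_big_nat => j /andP[_ hj].
      rewrite (_ : 0 - j%:Z = (0 - t%:Z) + (t - j)%N%:Z); last by lia.
      rewrite XE2; ring.
  move: H; rewrite ipee.
  have -> : (0 == 0 - t%:Z) = (t == 0%N) by apply/eqP/eqP => H; lia.
  by rewrite mulrC => /(mulfI s20).
have hXt : forall g, (1 <= g)%N -> Xt g \in Lfun P 2%:E.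
  elim/ltn_ind => g IH g1.
  rewrite (hrec g g1).
  apply: L2B.
    apply: L2N; apply: L2sum_nat => j /andP[j1 jg]; apply: IH; lia.
  apply: L2sum_nat => j _; exact: hX.
pose Ef := fun w => \sum_(0 <= l < h) b l * eps (k%:Z + h%:Z - l%:Z) w.
pose S := fun w => Ef w - (X (k%:Z + h%:Z) w - Xt h w).
pose PN := fun N w => \sum_(k.+1 <= j < N)
                (\sum_(0 <= m < h) a (j + h - 1 - m)%N * b m) * X (k%:Z + 1 - j%:Z) w.
have hEf : Ef \in Lfun P 2%:E by apply: L2sum_nat => l _; exact: heps.
have hS : S \in Lfun P 2%:E by apply: L2B => //; apply: L2B => //; exact: hXt.
have hPN N : PN N \in Lfun P 2%:E by apply: L2sum_nat => j _; exact: hX.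
have hcvg : L2_cvg P PN S.
  apply/(L2cvgE P hPN hS).
  pose F := fun l N w => \sum_(0 <= j < N + (h - l - 1)) a j * X (k%:Z + h%:Z - l%:Z - j%:Z) w
                     - eps (k%:Z + h%:Z - l%:Z) w.
  have hF l N : F l N \in Lfun P 2%:E.
    by apply: L2B; [apply: L2sum_nat => j _; exact: hX | exact: heps].
  have Fnull l : (l < h)%N -> (fun N => ip P (F l N) (F l N)) @ \oo --> (0:R).
    move=> hl.
    have hu N : (fun w => \sum_(0 <= j < N) a j * X (k%:Z + h%:Z - l%:Z - j%:Z) w)
                  \in Lfun P 2%:E by apply: L2sum_nat => j _; exact: hX.
    have := (L2cvgE P hu (heps _)).1 (hAR (k%:Z + h%:Z - l%:Z)).
    by rewrite -(cvg_shiftn (h - l - 1)).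
  have G := null_sum P h b F hF Fnull.
  rewrite -(cvg_shiftn k.+1); rewrite -(cvg_shiftn k.+1) in G.
  move: G; rewrite (eq_cvg _ (g := fun n => ip P (fun w => PN (n + k.+1)%N w - S w) (fun w => PN (n + k.+1)%N w - S w))) //.
  move=> n /=.
  have -> : (fun w => \sum_(0 <= l < h) b l * F l (n + k.+1)%N w)
        = (fun w => PN (n + k.+1)%N w - S w).
    apply/funext => w.
    rewrite /PN /S /Ef /F.
    symmetry.
    exact: (final _ a b (fun i => X i w) (fun i => eps i w) (fun g => Xt g w) k ha0
        (fun g g1 => congr1 (fun f => f w) (hrec g g1)) hconv h (n + k.+1)%N h1 (leq_addl _ _)).
  by [].
have hSe l : (l < h)%N -> ip P S (eps (k%:Z + h%:Z - l%:Z)) = 0.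
  move=> hl.
  apply: (LL P PN); [exact: hPN|exact: hS|exact: heps|exact: hcvg|].
  exists 0%N => N _.
  rewrite /PN ipsum_nat; [|by move=> j _; exact: hX|exact: heps].
  rewrite big_nat_cond big1 // => j /andP[/andP[hj _] _].
  rewrite XE1 ?mulr0 //; lia.
have hSEf : ip P S Ef = 0.
  rewrite ipC /Ef ipsum_nat; [|by move=> l _; exact: heps|exact: hS].
  rewrite big_nat_cond big1 // => l /andP[/andP[_ hl] _].
  by rewrite ipC hSe // mulr0.
have hEfEf : ip P Ef Ef = s2 * \sum_(0 <= l < h) b l ^+ 2.
  rewrite {1}/Ef ipsum_nat; [|by move=> l _; exact: heps|exact: hEf].
  rewrite mulr_sumr; apply: eq_big_nat => l /andP[_ hl].
  rewrite ipC /Ef ipsum_nat; [|by move=> l' _; exact: heps|exact: heps].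
  transitivity (b l * \sum_(0 <= j < h) (s2 * b j) * (j == l)%:R).
    congr (_ * _); apply: eq_big_nat => j _; rewrite ipee.
    have -> : (k%:Z + h%:Z - j%:Z == k%:Z + h%:Z - l%:Z) = (j == l) by apply/eqP/eqP => H; lia.
    ring.
  rewrite sum_delta; last by apply/andP; split.
  ring.
exists S; split => //; split => //; split.
  apply: aeW => w /=; rewrite /S /Ef /=; ring.
have e1 : (fun w => (Xt h w - X (k%:Z + h%:Z) w) ^+ 2)
   = (fun w => S w + (-1) * Ef w) \* (fun w => S w + (-1) * Ef w).
  by apply/funext => w /=; rewrite /S; ring.
have e2 : (fun w => S w ^+ 2) = S \* S by apply/funext => w /=; rewrite expr2.
have hSm : (fun w => S w + (-1) * Ef w) \in Lfun P 2%:E by apply: L2D => //; exact: L2Z.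
rewrite e1 e2 (ipE P hSm hSm) (ipE P hS hS) quad // hSEf hEfEf -EFinD.
congr (_%:E); ring.
Qed.
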